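(* Let $p,q$ be integers with $1+|p|<|q|$ and $\gcd(p,q)=1$, and assume $t(x)=x^2+px-q$ is irreducible in $\mathbb{Z}[x]$. Then for every nonzero $\gamma\in\mathbb{Z}^2$ the language $\psi_{p,q}^{-1}(\langle\gamma\rangle)$ is not regular.
   Context: For $f,g\in\mathbb{Z}[x]$ write $f\sim g$ if $t$ divides $f-g$; identify $\mathbb{Z}^2$ with the additive group of $\mathbb{Z}[x]/\langle t\rangle$ via $(h_1,h_2)\mapsto[h_1x+h_2]_\sim$. Let $\Sigma_q=\{-(|q|-1),\dots,|q|-1\}$ with the order $-(|q|-1)<\dots<|q|-1$; a string $a_0a_1\dots a_n\in\Sigma_q^*$ represents the polynomial $a_nx^n+\dots+a_1x+a_0$, and two strings are equivalent if their polynomials are $\sim$-equivalent. $\mathrm{Dom}_{p,q}$ is the set of $w\in\Sigma_q^*$ such that no string strictly smaller than $w$ in the length-lexicographic order on $\Sigma_q^*$ is equivalent to $w$, and $\psi_{p,q}:\mathrm{Dom}_{p,q}\to\mathbb{Z}^2$ sends $w$ to the $\sim$-class of the polynomial it represents. *)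

(* Defs.v *)
From HB Require Import structures.
From mathcomp Require Import all_boot all_order all_algebra.
Set Implicit Arguments. Unset Strict Implicit. Unset Printing Implicit Defensive.
Import Order.TTheory GRing.Theory Num.Theory.
Local Open Scope ring_scope.

Definition tpoly (p q : int) : {poly int} := 'X^2 + p%:P * 'X - q%:P.

Definition irreducible_Zx (f : {poly int}) : Prop :=
  f != 0 /\ f \isn't a GRing.unit /\
  forall g h : {poly int}, f = g * h -> g \is a GRing.unit \/ h \is a GRing.unit.

Definition tequiv (p q : int) (f g : {poly int}) : Prop :=
  exists h : {poly int}, f - g = h * tpoly p q.

Definition in_Sigma (q : int) (a : int) : bool := `|a| < `|q|.
Definition is_word (q : int) (w : seq int) : bool := all (in_Sigma q) w.

(* the string a_0 a_1 ... a_n represents a_n x^n + ... + a_1 x + a_0 *)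
Definition word_poly (w : seq int) : {poly int} := Poly w.

Fixpoint lex_lt (u w : seq int) : bool :=
  match u, w with
  | a :: u', b :: w' => (a < b) || ((a == b) && lex_lt u' w')
  | _, _ => false
  end.

Definition llex_lt (u w : seq int) : bool :=
  (size u < size w)%N || ((size u == size w) && lex_lt u w).

Definition in_Dom (p q : int) (w : seq int) : Prop :=
  is_word q w /\
  forall u, is_word q u -> llex_lt u w -> ~ tequiv p q (word_poly u) (word_poly w).

(* Z^2 identified with Z[x]/<t> via (h1,h2) |-> [h1 x + h2] *)
Definition pair_poly (h : int * int) : {poly int} := h.1%:P * 'X + h.2%:P.

Definition psi_is (p q : int) (w : seq int) (h : int * int) : Prop :=
  in_Dom p q w /\ tequiv p q (word_poly w) (pair_poly h).

Definition in_cyclic (gamma h : int * int) : Prop :=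
  exists k : int, h = (k * gamma.1, k * gamma.2).

Definition in_preimage (p q : int) (gamma : int * int) (w : seq int) : Prop :=
  exists h, psi_is p q w h /\ in_cyclic gamma h.

(* a language L over Sigma_q is regular: accepted by a DFA with finite state set
   (transition function given on all of int; only letters of Sigma_q matter) *)
Definition regular_lang (q : int) (L : seq int -> Prop) : Prop :=
  exists (Q : finType) (s : Q) (d : Q -> int -> Q) (F : pred Q),
    forall w, is_word q w -> (L w <-> F (foldl d s w)).

(* Main.v *)
Require Import Defs.
From HB Require Import structures.
From mathcomp Require Import all_boot all_order all_algebra.
From mathcomp Require Import ring lra zify.
From Stdlib Require Import Classical.
Import Order.TTheory GRing.Theory Num.Theory.
Local Open Scope ring_scope.


Section S.
Variables p q : int.
Notation teq := (tequiv p q).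

Lemma teq_refl f : teq f f.
Proof. by exists 0; rewrite subrr mul0r. Qed.
Lemma teq_sym f g : teq f g -> teq g f.
Proof. by case=> h e; exists (- h); rewrite mulNr -e opprB. Qed.
Lemma teq_trans f g k : teq f g -> teq g k -> teq f k.
Proof. by case=> h e [h' e']; exists (h + h'); rewrite mulrDl -e -e'; ring. Qed.
Lemma teq_add f g f' g' : teq f g -> teq f' g' -> teq (f + f') (g + g').
Proof. by case=> h e [h' e']; exists (h + h'); rewrite mulrDl -e -e'; ring. Qed.
Lemma teq_mull c f g : teq f g -> teq (c * f) (c * g).
Proof. by case=> h e; exists (c * h); rewrite -mulrA -e; ring. Qed.
Lemma teq_opp f g : teq f g -> teq (- f) (- g).
Proof. by case=> h e; exists (- h); rewrite mulNr -e; ring. Qed.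
Lemma teq_sub f g f' g' : teq f g -> teq f' g' -> teq (f - f') (g - g').
Proof. by move=> a b; apply: teq_add => //; apply: teq_opp. Qed.

Lemma word_poly_cons a w : word_poly (a :: w) = a%:P + 'X * word_poly w.
Proof. by rewrite /word_poly /= cons_poly_def addrC mulrC. Qed.

Lemma word_poly_cat u w :
  word_poly (u ++ w) = word_poly u + 'X^(size u) * word_poly w.
Proof.
elim: u => [|a u IH]; first by rewrite expr0 mul1r /word_poly /= add0r.
rewrite cat_cons !word_poly_cons IH /= exprS; ring.
Qed.

Fixpoint red (w : seq int) : int * int :=
  match w with
  | [::] => (0, 0)
  | a :: w' => let h := red w' in (h.2 - p * h.1, a + q * h.1)
  end.

Lemma step_teq (a h1 h2 : int) :
  teq (a%:P + 'X * pair_poly (h1, h2)) (pair_poly (h2 - p * h1, a + q * h1)).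
Proof.
exists h1%:P; rewrite /pair_poly /tpoly /= !rmorphD !rmorphM /= !rmorphN /=; ring.
Qed.

Lemma red_teq w : teq (word_poly w) (pair_poly (red w)).
Proof.
elim: w => [|a w IH].
  by exists 0; rewrite mul0r /word_poly /pair_poly /= !polyC0 mul0r !addr0 subrr.
rewrite word_poly_cons /=.
apply: teq_trans (step_teq _ _ _).
apply: teq_add; first exact: teq_refl.
apply: teq_mull; case: (red w) IH => //.
Qed.

Lemma tpoly_size : size (tpoly p q) = 3%N.
Proof.
rewrite /tpoly -addrA size_polyDl ?size_polyXn //.
rewrite (leq_ltn_trans (size_polyD _ _)) //.
rewrite gtn_max size_polyN size_polyC (leq_ltn_trans (size_polyMleq _ _)) //.
  by case: (q != 0).
by rewrite size_polyC size_polyX; case: (p != 0).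

Qed.

Lemma tpoly_monic : tpoly p q \is monic.
Proof.
rewrite monicE /lead_coef tpoly_size /tpoly !coefE /=; apply/eqP; lia.
Qed.

Lemma lin_zero (c1 c0 : int) : teq (pair_poly (c1, c0)) 0 -> c1 = 0 /\ c0 = 0.
Proof.
case=> h; rewrite subr0 => e.
have h0 : h = 0.
  apply/eqP; apply: contraT => hn.
  have := size_Mmonic hn tpoly_monic; rewrite -e tpoly_size.
  have : (size (pair_poly (c1, c0)) <= 2)%N.
    rewrite /pair_poly /= (leq_trans (size_polyD _ _)) // geq_max size_polyC.
    rewrite (leq_trans (size_polyMleq _ _)) ?size_polyC ?size_polyX.
      by case: (c0 != 0).
    by case: (c1 != 0).
  move=> le2 eq2; move: le2; rewrite eq2.
  have : (0 < size h)%N by rewrite size_poly_gt0.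
  lia.
move: e; rewrite h0 mul0r /pair_poly /= => e.
have := congr1 (fun f : {poly int} => f`_0) e.
have := congr1 (fun f : {poly int} => f`_1) e.
rewrite /= !coefE /=; lia.
Qed.

End S.
Arguments teq_sym {p q f g}.
Arguments teq_trans {p q f g k}.
Arguments teq_add {p q f g f' g'}.
Arguments teq_sub {p q f g f' g'}.
Arguments teq_mull {p q} c {f g}.



Lemma digit_pos (q h : int) : q != 0 -> 0 <= h ->
  exists d k, h = d + q * k /\ 0 <= d < `|q| /\ `|q * k| <= h.
Proof.
move=> q0 h0; exists (h %% q)%Z, (h %/ q)%Z.
have e := divz_eq h q.
have m0 := modz_ge0 h q0; have m1 := ltz_mod h q0.
split; first by rewrite {1}e; ring.
split; first by rewrite m0 m1.
set d := (h %% q)%Z in e m0 m1 *; set k := (h %/ q)%Z in e *.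
have hq : `|q * k| = (if 0 <= q * k then q * k else - (q*k)).
  by case: ifP => c; [rewrite ger0_norm | rewrite ltr0_norm // ltNge c].
rewrite hq; case: ifP => c.
  lia.
exfalso.
have : `|q * k| >= `|q|.
  rewrite normrM ler_peMr //; case: (k =P 0) => [k0|]; first by move: c; rewrite k0 mulr0 lexx.
  by move/eqP; rewrite -normr_gt0.
rewrite hq c; lia.
Qed.

Lemma digit (q h : int) : q != 0 ->
  exists d k, h = d + q * k /\ `|d| < `|q| /\ `|q * k| <= `|h|.
Proof.
move=> q0; case: (lerP 0 h) => h0.
  have [d [k [e [/andP [d0 d1] b]]]] := digit_pos q h q0 h0.
  exists d, k; rewrite (ger0_norm d0) (ger0_norm h0); lia.
have h0' : 0 <= - h by lia.
have [d [k [e [/andP [d0 d1] b]]]] := digit_pos q (-h) q0 h0'.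
exists (- d), (- k); rewrite normrN (ger0_norm d0) (ltr0_norm h0) mulrN normrN.
split; [lia | lia].
Qed.

Lemma bound2 (Q P N a1 a2 b1 b2 c1 c2 : int) : 0 <= P -> P + 2 <= Q ->
  0 <= a1 -> 0 <= a2 -> 0 <= b1 -> 0 <= b2 -> 0 <= c1 -> 0 <= c2 ->
  Q * a1 <= N -> a2 <= N -> 1 <= N -> Q * b1 <= a2 -> b2 <= a1 + P * b1 ->
  Q * c1 <= b2 -> c2 <= b1 + P * c1 -> Q * c1 <= N - 1 /\ c2 <= N - 1.
Proof.
move=> P0 PQ a10 a20 b10 b20 c10 c20 h1 h2 N1 h3 h4 h5 h6.
have s1 : Q * (Q * c1) <= (1 + P) * N.
  have : Q * (Q * c1) <= Q * b2 by nia.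
  have : Q * b2 <= Q * a1 + P * (Q * b1) by nia.
  have : P * (Q * b1) <= P * N by nia.
  nia.
have s2 : Q * c1 < N.
  have : (1 + P) * N < Q * N by nia.
  nia.
have s3 : Q * (Q * c2) <= (Q + P + P * P) * N.
  have : Q * (Q * c2) <= Q * (Q * b1) + P * (Q * (Q * c1)) by nia.
  have : Q * (Q * b1) <= Q * N by nia.
  have : P * (Q * (Q * c1)) <= P * ((1 + P) * N) by nia.
  nia.
have : (Q + P + P * P) * N < Q * Q * N.
  have : Q + P + P * P < Q * Q by nia.
  nia.
nia.
Qed.

Lemma repr_exists (p q : int) : 1 + `|p| < `|q| ->
  forall h, exists w, is_word q w /\ tequiv p q (word_poly w) (pair_poly h).
Proof.
move=> pq.
have q0 : q != 0 by rewrite -normr_gt0; lia.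
suff H : forall N : nat, forall h : int * int,
    `|q| * `|h.1| <= N%:Z -> `|h.2| <= N%:Z ->
    exists w, is_word q w /\ tequiv p q (word_poly w) (pair_poly h).
  move=> h; apply: (H (absz (`|q| * `|h.1| + `|h.2|))); lia.
elim/ltn_ind => N IH [h1 h2] /= b1 b2.
case: (boolP ((h1 == 0) && (h2 == 0))) => [/andP [/eqP -> /eqP ->]|hn].
  by exists [::]; split => //; apply: (red_teq p q [::]).
have N1 : 1 <= N%:Z.
  move: hn; rewrite negb_and => /orP [] /eqP hz.
    have : 0 < `|h1| by rewrite normr_gt0; apply/eqP.
    nia.
  have : 0 < `|h2| by rewrite normr_gt0; apply/eqP.
  lia.
have [d0 [k [e0 [d0b kb]]]] := digit q h2 q0.
have [d1 [k' [e1 [d1b k'b]]]] := digit q (h1 + p * k) q0.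
have [c1 c2] : `|q| * `|k'| <= (N.-1)%:Z /\ `|k + p * k'| <= (N.-1)%:Z.
  have -> : (N.-1)%:Z = N%:Z - 1 by lia.
  apply: (bound2 `|q| `|p| N%:Z `|h1| `|h2| `|k| `|h1 + p * k|) => //; try lia.
have [w [ww ew]] := IH N.-1 ltac:(lia) (k', k + p * k') c1 c2.
exists (d0 :: d1 :: w); split.
  by rewrite /is_word /= /in_Sigma d0b d1b.
rewrite !word_poly_cons.
apply: teq_trans; last first.
  have -> : (h1, h2) = (h1 + p * k - p * k, d0 + q * k) by congr pair; lia.
  exact: teq_refl.
apply: teq_trans (step_teq _ _ _ _ _).
apply: teq_add; first exact: teq_refl.
apply: teq_mull.
have -> : (k, h1 + p * k) = (k + p * k' - p * k', d1 + q * k') by congr pair; lia.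
apply: teq_trans (step_teq _ _ _ _ _).
apply: teq_add; first exact: teq_refl.
by apply: teq_mull.
Qed.



Fixpoint code (Q : int) (u : seq int) : int :=
  match u with
  | [::] => 0
  | a :: u' => (a + (Q - 1)) * (2 * Q - 1) ^+ size u' + code Q u'
  end.

Lemma code_range q u : is_word q u ->
  0 <= code `|q| u < (2 * `|q| - 1) ^+ size u.
Proof.
elim: u => [|a u IH] /=; first by rewrite expr0.
rewrite /is_word /= => /andP [ha hu]; move: (IH hu) => /andP [c0 c1].
move: ha; rewrite /in_Sigma => ha.
set X := (2 * `|q| - 1) ^+ size u in c1 *.
rewrite exprS -/X.
have : `|a| < `|q| by [].
move=> h; apply/andP; split; nia.
Qed.

Lemma code_lex q u w : is_word q u -> is_word q w -> size u = size w ->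
  lex_lt u w -> code `|q| u < code `|q| w.
Proof.
elim: u w => [|a u IH] [|b w] //= /andP [ha hu] /andP [hb hw] [es] /orP [ab|/andP [/eqP ab l]].
  have /andP [c0 c1] := code_range q u hu; have /andP [d0 d1] := code_range q w hw.
  rewrite es in c1 *; set X := (2 * `|q| - 1) ^+ size w in c1 d1 *.
  move: ha hb; rewrite /in_Sigma => ha hb.
  nia.
by have := IH w hu hw es l; rewrite ab es; lia.
Qed.

Lemma dom_exists p q w : is_word q w ->
  exists w', in_Dom p q w' /\ tequiv p q (word_poly w') (word_poly w).
Proof.
suff H : forall n c : nat, forall w, is_word q w -> size w = n ->
    code `|q| w = c%:Z ->
    exists w', in_Dom p q w' /\ tequiv p q (word_poly w') (word_poly w).
  move=> ww; have /andP [c0 _] := code_range q w ww.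
  apply: (H (size w) (absz (code `|q| w))) => //; lia.
elim/ltn_ind => n IHn; elim/ltn_ind => c IHc {}w ww sw cw.
case: (classic (in_Dom p q w)) => [D|nD].
  by exists w; split => //; apply: teq_refl.
have [u [uw [lu eu]]] : exists u, is_word q u /\ llex_lt u w /\
    tequiv p q (word_poly u) (word_poly w).
  apply: NNPP => nE; apply: nD; split => // u uw lu eu.
  by apply: nE; exists u.
suff [w' [D' e']] : exists w', in_Dom p q w' /\ tequiv p q (word_poly w') (word_poly u).
  by exists w'; split => //; apply: teq_trans e' eu.
move: lu; rewrite /llex_lt => /orP [ls|/andP [/eqP ls lx]].
  have /andP [c0 _] := code_range q u uw.
  apply: (IHn (size u) _ (absz (code `|q| u)) u uw erefl); [by rewrite -sw | lia].
have /andP [c0 _] := code_range q u uw.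
have cl := code_lex q u w uw ww ls lx.
apply: (IHc (absz (code `|q| u))) => //; try lia.
Qed.



Lemma no_int_root p q : irreducible_Zx (tpoly p q) -> forall r, r * r + p * r - q <> 0.
Proof.
move=> [_ [_ irr]] r hr.
have e : tpoly p q = ('X - r%:P) * ('X + (r + p)%:P).
  have -> : q = r * r + p * r by lia.
  rewrite /tpoly !rmorphD !rmorphM /=; ring.
case: (irr _ _ e); rewrite poly_unitE.
  by rewrite size_XsubC.
by rewrite size_XaddC.
Qed.

Lemma rat_root (p q a b : int) : a != 0 -> b * b - a * b * p - a * a * q = 0 ->
  exists r, r * r + p * r - q = 0.
Proof.
move=> a0 e.
have [a' ea] := dvdzP (dvdz_gcdl a b).
have [b' eb] := dvdzP (dvdz_gcdr a b).
have [u [v euv]] := Bezoutz a b.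
set g := gcdz a b in ea eb euv.
have g0 : g != 0.
  apply: contraNneq a0 => g0; by rewrite ea g0 mulr0.
have cop : coprimez a' b'.
  apply/coprimezP; exists (u, v) => /=.
  apply: (mulIf g0); rewrite mul1r -[in RHS]euv ea eb; ring.
have e' : b' * b' - a' * b' * p - a' * a' * q = 0.
  apply: (mulIf (mulf_neq0 g0 g0)); rewrite mul0r.
  rewrite -{}e ea eb; ring.
have : (a' %| b' * b')%Z.
  apply/dvdzP; exists (b' * p + a' * q); lia.
rewrite Gauss_dvdzr // => /dvdzP [k ek].
have a'0 : a' != 0 by apply: contraNneq a0 => z; rewrite ea z mul0r.
exists (- k).
have H : a' * a' * ((- k) * (- k) + p * (- k) - q) = b' * b' - a' * b' * p - a' * a' * q.
  rewrite ek; ring.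
move: H; rewrite e' => /eqP; rewrite mulf_eq0 (negbTE (mulf_neq0 a'0 a'0)) /=.
by move/eqP.
Qed.

Lemma eigen_contra (p q a b c d : int) : irreducible_Zx (tpoly p q) -> a != 0 ->
  (c, d) != (0, 0) -> a * d + b * c - a * c * p = 0 -> a * c * q + b * d = 0 -> False.
Proof.
move=> irr a0 cd E1 E2.
have c0 : c != 0.
  apply: contraNneq cd => c0.
  have : a * d == 0 by move: E1; rewrite c0; lia.
  by rewrite mulf_eq0 (negbTE a0) /= => /eqP ->; rewrite c0.
have H : c * (b * b - a * b * p - a * a * q) = b * (a * d + b * c - a * c * p) - a * (a * c * q + b * d) by ring.
move: H; rewrite E1 E2 !mulr0 subrr => /eqP; rewrite mulf_eq0 (negbTE c0) /= => /eqP H.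
have [r hr] := rat_root p q a b a0 H.
exact: (no_int_root p q irr r hr).
Qed.

Section XP.
Variables p q : int.

Fixpoint xp (m : nat) : int * int :=
  match m with
  | O => (0, 1)
  | S m' => let h := xp m' in (h.2 - p * h.1, q * h.1)
  end.

Lemma xp_teq m : tequiv p q ('X^m) (pair_poly (xp m)).
Proof.
elim: m => [|m IH].
  exists 0; rewrite expr0 /pair_poly /=.
  rewrite polyC0 polyC1 !mul0r add0r subrr //.
rewrite exprS /=.
have -> : q * (xp m).1 = 0 + q * (xp m).1 by rewrite add0r.
apply: teq_trans (step_teq _ _ _ _ _).
rewrite polyC0 add0r; apply: teq_mull.
by case: (xp m) IH.
Qed.

Lemma cop_aux (x y : int) : coprimez x q -> coprimez p q -> coprimez (q * y - p * x) q.
Proof.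
move=> /coprimezP [[u v] /= e] /coprimezP [[u' v'] /= e'].
apply/coprimezP; exists (- (u * u'), u * u' * y + v + v' - v * v' * q) => /=.
have ux : u * x = 1 - v * q by rewrite -e; ring.
have up : u' * p = 1 - v' * q by rewrite -e'; ring.
rewrite (_ : _ * _ + _ = (u * x) * (u' * p) - u * u' * q * y + (u * u' * y + v + v' - v * v' * q) * q); last by ring.
rewrite ux up; ring.
Qed.

Lemma xp_cop m : coprimez p q -> coprimez (xp m.+1).1 q.
Proof.
move=> cpq.
suff : coprimez (xp m.+1).1 q /\ coprimez (xp m.+2).1 q by case.
elim: m => [|m [IH1 IH2]].
  split; first by apply/coprimezP; exists (1, 0) => /=; ring.
  have -> : (xp 2).1 = q * 0 - p * 1 by rewrite /=; ring.
  apply: cop_aux => //; apply/coprimezP; exists (1, 0) => /=; ring.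
split => //.
have -> : (xp m.+3).1 = q * (xp m.+1).1 - p * (xp m.+2).1 by [].
exact: cop_aux.
Qed.

Lemma xp_nz m : coprimez p q -> 1 < `|q| -> (xp m.+1).1 != 0.
Proof.
move=> cpq q1; apply/negP => /eqP e.
move: (xp_cop m cpq); rewrite e => /coprimezP [[u v] /= h].
have : v * q = 1 by rewrite mulr0 add0r in h.
move=> h'; have : `|v * q| = 1 by rewrite h'.
rewrite normrM => H.
have [v0|v1] : `|v| = 0 \/ 1 <= `|v| by lia.
  by move: H; rewrite v0 mul0r.
have : `|q| <= `|v| * `|q| by rewrite ler_peMl //; lia.
lia.
Qed.
End XP.



Section E.
Variables p q : int.
Notation teq := (tequiv p q).

Lemma pair_teq_eq h h' : teq (pair_poly h) (pair_poly h') -> h = h'.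
Proof.
case: h h' => [h1 h2] [h1' h2'] e.
have : teq (pair_poly (h1 - h1', h2 - h2')) 0.
  have -> : pair_poly (h1 - h1', h2 - h2') = pair_poly (h1, h2) - pair_poly (h1', h2').
    rewrite /pair_poly /= ?rmorphD ?rmorphB ?rmorphN /=; ring.
  rewrite -(subrr (pair_poly (h1', h2'))).
  by apply: teq_sub => //; apply: teq_refl.
move/lin_zero => [e1 e2]; congr pair; lia.
Qed.

Lemma prod_teq a b c d : teq (pair_poly (a, b) * pair_poly (c, d))
  (pair_poly (a * d + b * c - a * c * p, a * c * q + b * d)).
Proof.
exists (a * c)%:P; rewrite /pair_poly /tpoly /= !rmorphD ?rmorphB ?rmorphN !rmorphM /=; ring.
Qed.

Lemma pair_scale k (g : int * int) : pair_poly (k * g.1, k * g.2) = k%:P * pair_poly g.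
Proof. rewrite /pair_poly /= !rmorphM /=; ring. Qed.

Fixpoint Mb (n : nat) : int :=
  match n with O => 0 | S n' => `|q| + (`|p| + `|q| + 1) * Mb n' end.

Lemma Mb_ge0 n : 0 <= Mb n.
Proof. elim: n => //= n IH; nia. Qed.

Lemma Mb_mono m n : (m <= n)%N -> Mb m <= Mb n.
Proof.
move/subnK <-; elim: (n - m)%N => [|k IH] //=.
have := Mb_ge0 (k + m); nia.
Qed.

Lemma red_bound w : is_word q w ->
  `|(red p q w).1| <= Mb (size w) /\ `|(red p q w).2| <= Mb (size w).
Proof.
elim: w => [|a w IH] //= /andP [ha hw].
move: (IH hw) => [b1 b2]; move: ha; rewrite /in_Sigma => ha.
set h := red p q w in b1 b2 *.
have := Mb_ge0 (size w).
split.
  rewrite (le_trans (ler_normB _ _)) // normrM; nia.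
rewrite (le_trans (ler_normD _ _)) // normrM; nia.
Qed.
End E.
Arguments pair_teq_eq {p q h h'}.



Lemma is_word_cat q u w : is_word q (u ++ w) = is_word q u && is_word q w.
Proof. by rewrite /is_word all_cat. Qed.

Lemma pump (T : finType) (s : T) (d : T -> int -> T) (w : seq int) :
  (#|T| < size w)%N ->
  exists i j, (i < j <= #|T|)%N /\ foldl d s (take i w) = foldl d s (take j w).
Proof.
move=> sz.
pose f (i : 'I_(#|T|).+1) := foldl d s (take i w).
have ninj : ~ injective f.
  move=> inj; have := leq_card f inj; rewrite card_ord; lia.
have [i [j [fij nij]]] : exists i j, f i = f j /\ i <> j.
  apply: NNPP => H; apply: ninj => i j fij.
  by apply: NNPP => nij; apply: H; exists i, j.
have hi := ltn_ord i; have hj := ltn_ord j.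
have nij' : (nat_of_ord i) <> (nat_of_ord j) by move=> e; apply: nij; apply: val_inj.
case: (ltngtP i j) => c.
- by exists i, j; split => //; apply/andP; split; lia.
- by exists j, i; split => //; apply/andP; split; lia.
- by exfalso; apply: nij'.
Qed.

Theorem mainTheorem7 (p q : int) :
  1 + `|p| < `|q| ->
  gcdz p q = 1%N ->
  irreducible_Zx (tpoly p q) ->
  forall gamma : int * int, gamma != (0, 0) ->
  ~ regular_lang q (in_preimage p q gamma).
Proof.
move=> pq gcd1 irr [g1 g2] g0 [T [s [dl [F HL]]]].
have cpq : coprimez p q by rewrite /coprimez gcd1.
have q1 : 1 < `|q| by lia.
set n := #|T|.
set k := Mb p q n + 1.
have [w0 [ww0 e0]] := repr_exists p q pq (k * g1, k * g2).
have [w [Dw ew]] := dom_exists p q w0 ww0.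
have wL : in_preimage p q (g1, g2) w.
  exists (k * g1, k * g2); split; last by exists k.
  by split => //; apply: teq_trans ew e0.
have ww : is_word q w by case: Dw.
have szw : (n < size w)%N.
  rewrite ltnNge; apply/negP => sz.
  have := red_teq p q w => er.
  have eh := pair_teq_eq (teq_trans (teq_sym er) (teq_trans ew e0)).
  have [b1 b2] := red_bound p q w ww.
  have m1 := Mb_mono p q _ _ sz; have m0 := Mb_ge0 p q (size w).
  have m2 := Mb_ge0 p q n.
  rewrite eh /= /k !normrM (@ger0_norm _ (Mb p q n + 1)) in b1 b2; last lia.
  case: (g1 =P 0) => [e1|/eqP n1].
    have n2 : g2 != 0 by apply: contraNneq g0 => e2; rewrite e1 e2.
    have := n2; rewrite -normr_gt0; nia.
  have := n1; rewrite -normr_gt0; nia.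
have [i [j [/andP [ij jn] st]]] := pump T s dl w szw.
set u := take i w; set v := drop i (take j w); set z := drop j w.
have tj : take j w = u ++ v.
  by rewrite /u /v -{1}(take_takel w (ltnW ij)) cat_take_drop.
have ew' : w = u ++ v ++ z by rewrite catA -tj cat_take_drop.
have su : size u = i by rewrite size_takel //; lia.
have sv : size v = (j - i)%N by rewrite size_drop size_takel //; lia.
have st' : foldl dl s (u ++ v) = foldl dl s u by rewrite -tj -st.
have := ww; rewrite ew' !is_word_cat => /and3P [wu wv wz].
have Fw : F (foldl dl s w) := (proj1 (HL w ww)) wL.
have F1 : F (foldl dl s (u ++ z)).
  by rewrite foldl_cat -st' -foldl_cat -catA -ew'.
have F3 : F (foldl dl s (u ++ v ++ v ++ z)).
  by rewrite catA foldl_cat st' -foldl_cat -ew'.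
have [h1 [[D1 E1] [k1 eh1]]] := proj2 (HL (u ++ z) ltac:(by rewrite is_word_cat wu wz)) F1.
have [h3 [[D3 E3] [k3 eh3]]] := proj2 (HL (u ++ v ++ v ++ z) ltac:(by rewrite !is_word_cat wu wv wz)) F3.
have [h2 [[D2 E2] [k2 eh2]]] := wL.
rewrite {}eh1 pair_scale in E1; rewrite {}eh2 pair_scale in E2; rewrite {}eh3 pair_scale in E3.
set G := pair_poly (g1, g2) in E1 E2 E3.
set m := (j - i)%N in sv.
set U := word_poly u in E1 E2 E3; set V := word_poly v; set Z := word_poly z.
have W1 : word_poly (u ++ z) = U + 'X^i * Z by rewrite word_poly_cat su.
have W2 : word_poly w = U + 'X^i * (V + 'X^m * Z) by rewrite ew' !word_poly_cat su sv.
have W3 : word_poly (u ++ v ++ v ++ z) = U + 'X^i * (V + 'X^m * (V + 'X^m * Z)).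
  by rewrite !word_poly_cat su sv.
have T21 : tequiv p q (word_poly w - word_poly (u ++ z)) ((k2 - k1)%:P * G).
  have -> : (k2 - k1)%:P * G = k2%:P * G - k1%:P * G by rewrite rmorphB /=; ring.
  exact: teq_sub E2 E1.
have T32 : tequiv p q ('X^m * (word_poly w - word_poly (u ++ z))) ((k3 - k2)%:P * G).
  have -> : 'X^m * (word_poly w - word_poly (u ++ z)) = word_poly (u ++ v ++ v ++ z) - word_poly w.
    rewrite W1 W2 W3; ring.
  have -> : (k3 - k2)%:P * G = k3%:P * G - k2%:P * G by rewrite rmorphB /=; ring.
  exact: teq_sub E3 E2.
have m0 : (0 < m)%N by rewrite /m; lia.
case: (eqVneq (k2 - k1) 0) => e0'.
  apply: (proj2 Dw (u ++ z)).
  - by rewrite is_word_cat wu wz.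
  - by rewrite /llex_lt ew' !size_cat sv; apply/orP; left; lia.
  - move: T21; rewrite e0' polyC0 mul0r => -[h eh]; exists (- h).
    by rewrite mulNr -eh subr0 opprB.
set e := k2 - k1 in e0' T21; set f := k3 - k2 in T32.
have TX := xp_teq p q m.
have T4 : tequiv p q (pair_poly (xp p q m) * pair_poly (e * g1, e * g2))
    (pair_poly (f * g1, f * g2)).
  rewrite (pair_scale e (g1, g2)) (pair_scale f (g1, g2)) -/G.
  apply: (teq_trans _ T32).
  apply: (@teq_trans _ _ _ ('X^m * (e%:P * G))).
    rewrite mulrC [X in tequiv _ _ _ X]mulrC; apply: teq_mull; exact: teq_sym.
  by apply: teq_mull; apply: teq_sym.
move: (teq_trans (teq_sym (prod_teq p q _ _ _ _)) T4) => /pair_teq_eq [eq1 eq2].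
have [m' em] : exists m', m = m'.+1 by exists m.-1; lia.
have A0 := xp_nz p q m' cpq q1; rewrite -em in A0.
apply: (eigen_contra p q (e * (xp p q m).1) (e * (xp p q m).2 - f) g1 g2 irr).
- by rewrite mulf_neq0.
- exact: g0.
- have -> : e * (xp p q m).1 * g2 + (e * (xp p q m).2 - f) * g1 - e * (xp p q m).1 * g1 * p
      = ((xp p q m).1 * (e * g2) + (xp p q m).2 * (e * g1) - (xp p q m).1 * (e * g1) * p) - f * g1 by ring.
  by rewrite eq1 subrr.
- have -> : e * (xp p q m).1 * g1 * q + (e * (xp p q m).2 - f) * g2
      = ((xp p q m).1 * (e * g1) * q + (xp p q m).2 * (e * g2)) - f * g2 by ring.
  by rewrite eq2 subrr.
Qed.
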